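(* Let $n$ be a positive integer and let $G\subset\mathrm{GL}_2(\mathbb{Z}/n)$ be a subgroup containing $\mathrm{SL}_2^+(\mathbb{Z}/n)$, acting on $(\mathbb{Z}/n)^2$ tautologically. If $n$ is odd, then $H^1(G,(\mathbb{Z}/n)^2)=0$. If $n=2^r m$ with $m$ odd and $r\geq1$, then the abelian group $H^1(G,(\mathbb{Z}/n)^2)$ is annihilated by $2^{r-1}$.
   Context: For an integer $n>1$, $\mathrm{SL}_2^+(\mathbb{Z}/n)$ is defined as $\mathrm{SL}_2(\mathbb{Z}/n)$ if $n$ is odd, and, if $n$ is even, as the kernel of the composite $\mathrm{SL}_2(\mathbb{Z}/n)\to\mathrm{SL}_2(\mathbb{Z}/2)\cong S_3\to\{\pm1\}$ of reduction modulo $2$ and the signature. *)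

(* Defs.v *)
From HB Require Import structures.
From mathcomp Require Import all_boot all_order all_algebra all_fingroup.
Set Implicit Arguments. Unset Strict Implicit. Unset Printing Implicit Defensive.
Import GRing.Theory.
Local Open Scope ring_scope.
Local Open Scope group_scope.

(* Reduction modulo 2 of a matrix over Z/n (a ring map when n is even). *)
Definition red2 (n : nat) (A : 'M['Z_n]_2) : 'M['Z_2]_2 :=
  map_mx (fun x : 'Z_n => (inZp (val x) : 'Z_2)) A.

(* Permutation of (Z/2)^2 (row vectors) induced by an invertible B : v |-> v B;
   the identity when B is not invertible. *)
Definition mx_perm (B : 'M['Z_2]_2) : {perm 'rV['Z_2]_2} :=
  match boolP (B \in unitmx) with
  | AltTrue H => perm (can_inj (mulmxK H))
  | AltFalse _ => 1%g
  end.

Definition SL2plus (n : nat) : {set {'GL_2['Z_n]}} :=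
  [set g : {'GL_2['Z_n]} | (\det (GLval g) == 1%R)
     && (odd n || ~~ odd_perm (mx_perm (red2 (GLval g))))].

Definition cocycle (n : nat) (G : {set {'GL_2['Z_n]}})
    (f : {'GL_2['Z_n]} -> 'cV['Z_n]_2) : Prop :=
  forall g h, g \in G -> h \in G -> f (g * h)%g = (f g + GLval g *m f h)%R.

Definition coboundary (n : nat) (G : {set {'GL_2['Z_n]}})
    (f : {'GL_2['Z_n]} -> 'cV['Z_n]_2) : Prop :=
  exists v : 'cV['Z_n]_2, forall g, g \in G -> f g = (GLval g *m v - v)%R.

(* Main.v *)
Require Import Defs.
From HB Require Import structures.
From mathcomp Require Import all_boot all_order all_algebra all_fingroup.
From mathcomp Require Import ring zify.
Set Implicit Arguments. Unset Strict Implicit. Unset Printing Implicit Defensive.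
Import GRing.Theory.
Local Open Scope ring_scope.

Definition par (n : nat) (x : 'Z_n) : bool := odd (val x).

Lemma par_nat n (hn : (1 < n)%N) (ev : ~~ odd n) k : par (k%:R : 'Z_n) = odd k.
Proof. by rewrite /par /= val_Zp_nat // odd_mod //; apply/negbTE. Qed.

Lemma parE n (x : 'Z_n) : x = (val x)%:R.
Proof. by rewrite natr_Zp. Qed.

Lemma parD n (hn : (1 < n)%N) (ev : ~~ odd n) (x y : 'Z_n) :
  par (x + y) = par x (+) par y.
Proof.
rewrite [x in LHS]parE [y in LHS]parE -natrD par_nat // oddD.
by rewrite /par.
Qed.

Lemma parM n (hn : (1 < n)%N) (ev : ~~ odd n) (x y : 'Z_n) :
  par (x * y) = par x && par y.
Proof.
rewrite [x in LHS]parE [y in LHS]parE -natrM par_nat // oddM.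
by rewrite /par.
Qed.

Lemma parB n (hn : (1 < n)%N) (ev : ~~ odd n) (x y : 'Z_n) :
  par (x - y) = par x (+) par y.
Proof.
have := parD hn ev (x - y) y; rewrite subrK => ->.
by rewrite -addbA addbb addbF.
Qed.

Lemma par1 n (hn : (1 < n)%N) (ev : ~~ odd n) : par (1 : 'Z_n) = true.
Proof. exact: (par_nat hn ev 1). Qed.

Lemma par0 n : par (0 : 'Z_n) = false.
Proof. by []. Qed.

Definition halfZ n (x : 'Z_n) : 'Z_n := ((val x)./2)%:R.

Lemma halfP n (hn : (1 < n)%N) (ev : ~~ odd n) (x : 'Z_n) :
  par x = false -> x = 2%:R * halfZ x.
Proof.
move=> px; rewrite /halfZ -natrM [x in LHS]parE; congr (_%:R).
rewrite /par in px; by rewrite -{1}(odd_double_half (val x)) px add0n -mul2n.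
Qed.

Lemma unit_par n (hn : (1 < n)%N) (ev : ~~ odd n) (x : 'Z_n) :
  x \is a GRing.unit -> par x = true.
Proof.
move=> /unitrP [y [h _]]; have := congr1 (@par n) h.
by rewrite parM // par1 // => /andP[].
Qed.


Lemma mx2E (R : comNzRingType) (A B : 'M[R]_2) i j :
  (A *m B) i j = A i 0 * B 0 j + A i 1 * B 1 j.
Proof. rewrite !mxE big_ord_recl big_ord_recl big_ord0 addr0.
by have -> : lift ord0 ord0 = 1 :> 'I_2 by apply/val_inj. Qed.

Lemma det2 (R : comNzRingType) (A : 'M[R]_2) :
  \det A = A 0 0 * A 1 1 - A 0 1 * A 1 0.
Proof.
rewrite (expand_det_row _ 0) big_ord_recl big_ord_recl big_ord0 addr0 /cofactor !det_mx11 !mxE /=.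
have E1 : lift 0 0 = 1 :> 'I_2 by apply/val_inj.
have E2 : lift ord0 0 = 1 :> 'I_2 by apply/val_inj.
have E3 : lift ord0 ord0 = 1 :> 'I_2 by apply/val_inj.
have E4 : lift (lift ord0 ord0) 0 = 0 :> 'I_2 by apply/val_inj.
have E5 : lift 1 0 = 0 :> 'I_2 by apply/val_inj.
rewrite ?E1 ?E2 ?E3 ?E4 E5 /= expr0 expr1 !mul1r mulN1r mulrN.
by [].
Qed.

Definition Tm n : 'M['Z_n]_2 := \matrix_(i, j) (if (i == 1) && (j == 1) then 0 else 1).

Lemma ord2_ind (P : 'I_2 -> Prop) : P 0 -> P 1 -> forall i, P i.
Proof.
move=> P0 P1 [[|[|k]] hk] //.
- by have -> : Ordinal hk = 0 by apply/val_inj.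
- by have -> : Ordinal hk = 1 by apply/val_inj.
Qed.

Lemma norm_par n (hn : (1 < n)%N) (ev : ~~ odd n) (g : 'M['Z_n]_2) :
  \det g \is a GRing.unit ->
  (forall i j, par ((g *m Tm n - Tm n *m g) i j) = false) \/
  (forall i j, par ((g *m Tm n - (Tm n *m Tm n) *m g) i j) = false).
Proof.
move/(unit_par hn ev); rewrite det2 parB // !parM //.
have pT : forall i j, par (Tm n i j) = ~~ ((i == 1) && (j == 1)).
  by move=> i j; rewrite mxE; case: ifP => _; rewrite ?par1 ?par0.
have pTT : forall i j, par ((Tm n *m Tm n) i j) = true (+) (~~ (i == 1) && ~~ (j == 1)).
  by move=> i j; rewrite mx2E parD // !parM // !pT; elim/ord2_ind: i; elim/ord2_ind: j.
have E : forall (B : 'M['Z_n]_2) (i j : 'I_2), par ((g *m Tm n - B *m g) i j) =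
   (par (g i 0) && par (Tm n 0 j) (+) par (g i 1) && par (Tm n 1 j)) (+)
   (par (B i 0) && par (g 0 j) (+) par (B i 1) && par (g 1 j)).
  by move=> B i j; rewrite [X in par X]mxE [X in par (_ + X)]mxE parB // !mx2E !parD // !parM.
have all4 : forall P : 'I_2 -> 'I_2 -> Prop, P 0 0 -> P 0 1 -> P 1 0 -> P 1 1 -> forall i j, P i j.
  by move=> P ? ? ? ? i j; elim/ord2_ind: i; elim/ord2_ind: j.
move=> hdet.
suff : [/\ par ((g *m Tm n - Tm n *m g) 0 0) = false, par ((g *m Tm n - Tm n *m g) 0 1) = false,
   par ((g *m Tm n - Tm n *m g) 1 0) = false & par ((g *m Tm n - Tm n *m g) 1 1) = false] \/
  [/\ par ((g *m Tm n - (Tm n *m Tm n) *m g) 0 0) = false, par ((g *m Tm n - (Tm n *m Tm n) *m g) 0 1) = false,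
   par ((g *m Tm n - (Tm n *m Tm n) *m g) 1 0) = false & par ((g *m Tm n - (Tm n *m Tm n) *m g) 1 1) = false].
  by case=> [[? ? ? ?]|[? ? ? ?]]; [left|right]; apply: all4.
rewrite !E !pT !pTT /=; move: hdet.
move: (par (g 0 0)) (par (g 0 1)) (par (g 1 0)) (par (g 1 1)).
by do 4! case; move=> // _; first [by left; split | by right; split].
Qed.


Lemma even_mx n (hn : (1 < n)%N) (ev : ~~ odd n) (Y : 'M['Z_n]_2) :
  (forall i j, par (Y i j) = false) -> exists Z : 'M['Z_n]_2, Y = 2%:R *: Z.
Proof.
move=> hY; exists (\matrix_(i, j) halfZ (Y i j)); apply/matrixP => i j.
by rewrite !mxE -halfP.
Qed.

Lemma coc_comm n (G : {group {'GL_2['Z_n]}}) f (hc : cocycle G f) g z :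
  g \in G -> z \in G -> (z * g = g * z)%g ->
  (GLval z - 1) *m f g = (GLval g - 1) *m f z.
Proof.
move=> gG zG czg.
have := hc _ _ zG gG; rewrite czg hc // => H.
rewrite !mulmxBl !mul1mx.
have -> : GLval z *m f g = f g + GLval g *m f z - f z.
  by rewrite H addrAC subrr add0r.
by rewrite addrAC [f g + _]addrC addrK.
Qed.


Definition Pm n : 'M['Z_n]_2 :=
  \matrix_(i, j) (if i == 0 then (if j == 0 then 0 else 1) else (if j == 0 then 1 else -1)).

Lemma PT n : Pm n *m Tm n = 1.
Proof.
apply/matrixP => i j; rewrite mx2E !mxE.
by elim/ord2_ind: i; elim/ord2_ind: j; rewrite /= ?mulr1n ?mulr0n; ring.
Qed.

Lemma TP n : Tm n *m Pm n = 1.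
Proof.
apply/matrixP => i j; rewrite mx2E !mxE.
by elim/ord2_ind: i; elim/ord2_ind: j; rewrite /= ?mulr1n ?mulr0n; ring.
Qed.


Lemma zid (V : zmodType) (a g s o : V) : (a - g - (s - o)) - (a - s - (g - o)) = 0.
Proof. by rewrite !opprB addrACA !addrA !subrK subrr. Qed.

Lemma GLvalM n (u w : {'GL_2['Z_n]}) : GLval (u * w)%g = GLval u *m GLval w.
Proof. exact: GL_MxE. Qed.

Lemma GLinj n (u w : {'GL_2['Z_n]}) : GLval u = GLval w -> u = w.
Proof. exact: val_inj. Qed.

Lemma two_part n m (hn1 : (1 < n)%N) (hm : odd m) (hnm : n = (2 * m)%N)
  (G : {group {'GL_2['Z_n]}}) (t : {'GL_2['Z_n]}) (tG : t \in G)
  (tE : GLval t = 1 + m%:R *: Tm n)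
  (h : {'GL_2['Z_n]} -> 'cV['Z_n]_2) (hc : cocycle G h)
  (hM : forall g, g \in G -> m%:R *: h g = h g) : coboundary G h.
Proof.
have ev : ~~ odd n by rewrite hnm oddM.
have e2 : 2%:R * (m%:R : 'Z_n) = 0 by rewrite -natrM -hnm pchar_Zp.
have ee : (m%:R : 'Z_n) * m%:R = m%:R.
  rewrite -natrM; have -> : (m * m = m + n * m./2)%N.
    have := odd_double_half m; rewrite hm hnm => hk.
    rewrite -{1 2 3}hk; lia.
  by rewrite natrD natrM pchar_Zp // mul0r addr0.
move: tE hM e2 ee; set e : 'Z_n := m%:R => tE hM e2 ee.
set v := Pm n *m h t.
have ev_v : e *: v = v by rewrite /v scalemxAr hM.
have ht : h t = (GLval t - 1) *m v.
  by rewrite tE addrAC subrr add0r -scalemxAl /v mulmxA TP mul1mx hM.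
have key : forall s (Tj Pj : 'M['Z_n]_2), s \in G -> GLval s = 1 + e *: Tj -> Pj *m Tj = 1 ->
   h s = (GLval s - 1) *m v -> forall g, g \in G -> (g * t = s * g)%g ->
   h g = (GLval g - 1) *m v.
  move=> s Tj Pj sG sE PT' hs g gG gts.
  have E := hc _ _ gG tG; rewrite gts hc // in E.
  set u := h g - (GLval g - 1) *m v.
  have su : (GLval s - 1) *m u = 0.
    rewrite /u mulmxBr mulmxA.
    have -> : (GLval s - 1) *m h g = (GLval g *m GLval t - GLval g - (GLval s - 1)) *m v.
      rewrite mulmxBl mul1mx.
      have -> : GLval s *m h g = h g + GLval g *m h t - h s by rewrite -E addrAC subrr add0r.
      rewrite addrAC [h g + _]addrC addrK ht hs mulmxA -mulmxBl mulmxBr mulmx1.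
      by [].
    have -> : (GLval s - 1) *m (GLval g - 1) = GLval g *m GLval t - GLval s - (GLval g - 1).
      by rewrite mulmxBl mul1mx mulmxBr mulmx1 -[GLval s *m GLval g]GLvalM -gts GLvalM.
    by rewrite -mulmxBl zid mul0mx.
  have sm1 : GLval s - 1 = e *: Tj by rewrite sE addrAC subrr add0r.
  have eu0 : e *: u = 0.
    by rewrite -[u]mul1mx idmxE -PT' -mulmxA scalemxAr scalemxAl -sm1 su mulmx0.
  have eu : e *: u = u by rewrite /u scalerBr hM // scalemxAr ev_v.
  by apply/eqP; rewrite -subr_eq0 -/u -eu eu0.
have comm : forall (A B C Z : 'M['Z_n]_2), A *m B - C *m A = 2%:R *: Z ->
    A *m (1 + e *: B) = (1 + e *: C) *m A.
  move=> A B C Z hZ; rewrite mulmxDr mulmx1 mulmxDl mul1mx -scalemxAr -scalemxAl.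
  have -> : A *m B = C *m A + 2%:R *: Z by rewrite -hZ addrC subrK.
  by rewrite scalerDr scalerA mulrC e2 scale0r addr0.
exists v => g gG.
suff -> : h g = (GLval g - 1) *m v by rewrite mulmxBl mul1mx.
have gdet : \det (GLval g) \is a GRing.unit by rewrite -unitmxE GL_unitmx.
case: (norm_par hn1 ev gdet) => /(even_mx hn1 ev) [Z hZ].
- apply: (key t (Tm n) (Pm n)) => //; first exact: PT.
  by apply: GLinj; rewrite !GLvalM tE; apply: comm hZ.
- have ttE : GLval (t * t)%g = 1 + e *: (Tm n *m Tm n).
    rewrite GLvalM tE mulmxDr mulmx1 mulmxDl mul1mx -scalemxAl -scalemxAr scalerA ee.
    rewrite addrA -[1 + _ + _]addrA -scalerDl.
    by rewrite -mulr2n -mulr_natl e2 scale0r addr0.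
  apply: (key (t * t)%g (Tm n *m Tm n) (Pm n *m Pm n)) => //.
  + exact: groupM.
  + by rewrite mulmxA -(mulmxA (Pm n)) PT mulmx1 PT.
  + rewrite hc // GLvalM.
    have -> : GLval t *m GLval t - 1 = (GLval t - 1) + GLval t *m (GLval t - 1).
      by rewrite mulmxBr mulmx1 [RHS]addrC addrA subrK.
    by rewrite mulmxDl -mulmxA -ht.
  + by apply: GLinj; rewrite !GLvalM -(GLvalM t t) ttE tE; apply: comm hZ.
Qed.


Lemma mx_perm_even (B : 'M['Z_2]_2) : B *m B *m B = 1%:M -> ~~ odd_perm (mx_perm B).
Proof.
move=> h3; rewrite /mx_perm; destruct (boolP (B \in unitmx)) as [H|H]; last by rewrite odd_perm1.
set p := perm _.
have : (p * p * p = 1)%g.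
  by apply/permP => x; rewrite !permM !permE -2!mulmxA [B *m (B *m B)]mulmxA h3 mulmx1.
move/(congr1 (@odd_perm _)); rewrite !odd_permM odd_perm1.
by case: (odd_perm p).
Qed.

Definition Bc : 'M['Z_2]_2 := \matrix_(i, j) (if (i == 0) && (j == 0) then 0 else 1).

Lemma Bc3 : Bc *m Bc *m Bc = 1%:M.
Proof.
apply/matrixP => i j; rewrite !mx2E !mxE.
by elim/ord2_ind: i; elim/ord2_ind: j; apply/val_inj.
Qed.

Lemma one3 : (1%:M : 'M['Z_2]_2) *m 1%:M *m 1%:M = 1%:M.
Proof. by rewrite !mulmx1. Qed.

Lemma red2E n (hn : (1 < n)%N) (ev : ~~ odd n) (A : 'M['Z_n]_2) i j :
  red2 A i j = (par (A i j))%:R.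
Proof.
rewrite /red2 mxE; apply/val_inj => /=.
by rewrite /par modn2; case: (odd _).
Qed.

Lemma par_mx1 n (hn : (1 < n)%N) (ev : ~~ odd n) i j :
  par ((1%:M : 'M['Z_n]_2) i j) = (i == j).
Proof. by rewrite mxE; case: (i == j); rewrite ?mulr1n ?mulr0n ?par1 ?par0. Qed.


Lemma mkGL n (A : 'M['Z_n]_2) : A \in unitmx -> exists u : {'GL_2['Z_n]}, GLval u = A.
Proof. by move=> hA; exists (insubd (1%g : {'GL_2['Z_n]}) A); rewrite insubdK. Qed.

Lemma parN n (hn : (1 < n)%N) (ev : ~~ odd n) (x : 'Z_n) : par (- x) = par x.
Proof. by rewrite -sub0r parB // par0. Qed.

Lemma detN1 n : \det (-1 : 'M['Z_n]_2) = 1.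
Proof. by rewrite -scaleN1r detZ det1 mulr1 sqrrN expr1n. Qed.

Lemma negGL n (hn : (1 < n)%N) :
  exists z : {'GL_2['Z_n]}, GLval z = -1 /\ z \in SL2plus n.
Proof.
have hu : (-1 : 'M['Z_n]_2) \in unitmx by rewrite unitmxE detN1 unitr1.
have [z zE] := mkGL hu; exists z; split => //.
rewrite inE zE detN1 eqxx /=.
case: (boolP (odd n)) => //= ev.
have -> : red2 (-1 : 'M['Z_n]_2) = 1%:M.
  apply/matrixP => i j; rewrite red2E // [X in par X]mxE parN // par_mx1 // mxE.
  by case: (i == j).
exact: mx_perm_even one3.
Qed.

Lemma ee_lemma n m (hm : odd m) (hnm : n = (2 * m)%N) (hn1 : (1 < n)%N) :
  (m%:R : 'Z_n) * m%:R = m%:R.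
Proof.
rewrite -natrM; have -> : (m * m = m + n * m./2)%N.
  have := odd_double_half m; rewrite hm hnm => hk.
  rewrite -{1 2 3}hk; lia.
by rewrite natrD natrM pchar_Zp // mul0r addr0.
Qed.

Lemma tGL n m (hn1 : (1 < n)%N) (hm : odd m) (hnm : n = (2 * m)%N) :
  exists t : {'GL_2['Z_n]}, GLval t = 1 + m%:R *: Tm n /\ t \in SL2plus n.
Proof.
have ev : ~~ odd n by rewrite hnm oddM.
have ee := ee_lemma hm hnm hn1.
have hd : \det (1 + m%:R *: Tm n : 'M['Z_n]_2) = 1.
  rewrite det2 !mxE /=; rewrite ?mulr1n ?mulr0n ?mulr1 ?mulr0 ?add0r ?addr0 ee.
  by rewrite mulr1 addrK.
have hu : (1 + m%:R *: Tm n : 'M['Z_n]_2) \in unitmx by rewrite unitmxE hd unitr1.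
have [t tE] := mkGL hu; exists t; split => //.
rewrite inE tE hd eqxx /= (negbTE ev) /=.
have -> : red2 (1 + m%:R *: Tm n) = Bc.
  apply/matrixP => i j; rewrite red2E // [X in par X]mxE parD // par_mx1 //.
  rewrite [X in par X]mxE parM // par_nat // hm /= mxE.
  rewrite /Bc mxE; by elim/ord2_ind: i; elim/ord2_ind: j; rewrite /= ?par1 ?par0; apply/val_inj.
exact: mx_perm_even Bc3.
Qed.


Local Close Scope ring_scope.
Unset Implicit Arguments. Set Strict Implicit.

Theorem proposition4p2 (n : nat) (n_gt1 : (1 < n)%N)
    (G : {group {'GL_2['Z_n]}}) (hG : SL2plus n \subset G) :
  (odd n ->
     forall f : {'GL_2['Z_n]} -> 'cV['Z_n]_2, cocycle G f -> coboundary G f)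
  /\
  (forall r m : nat, odd m -> (0 < r)%N -> n = (2 ^ r * m)%N ->
     forall f : {'GL_2['Z_n]} -> 'cV['Z_n]_2, cocycle G f ->
       coboundary G (fun g => (f g *+ 2 ^ r.-1)%R)).
Proof.
have [z [zE zS]] := negGL n_gt1.
have zG : z \in G := subsetP hG z zS.
have R : forall (g : {'GL_2['Z_n]}) (x : 'cV['Z_n]_2), (GLval g *m x - x = (GLval g - 1) *m x)%R.
  by move=> g x; rewrite mulmxBl mul1mx.
have two : forall f, cocycle G f -> forall g, g \in G ->
    (f g *+ 2 = (GLval g - 1) *m (- f z))%R.
  move=> f hc g gG.
  have czg : (z * g = g * z)%g.
    by apply: GLinj; rewrite !GLvalM zE mulNmx mulmxN mul1mx mulmx1.
  have := coc_comm hc gG zG czg; rewrite zE => H.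
  by rewrite mulmxN -H mulmxBl mulNmx !mul1mx opprB opprK mulr2n.
split.
  move=> hodd f hc.
  set i2 : 'Z_n := (((n.+1)./2)%:R)%R.
  have i22 : (i2 * 2%:R = 1)%R.
    rewrite /i2 -natrM; have -> : ((n.+1)./2 * 2 = n.+1)%N.
      by have := odd_double_half n.+1; rewrite /= hodd /= add0n -mul2n mulnC.
    by rewrite -addn1 natrD pchar_Zp // add0r.
  exists (i2 *: (- f z))%R => g gG.
  rewrite R -scalemxAr -(two f hc g gG) -scaler_nat scalerA.
  by rewrite [(i2 * _)%R]i22 scale1r.
move=> r m hm hr hnm f hc.
case: r hr hnm => [|[|r]] // _ hnm.
- rewrite expn1 in hnm.
  have [t [tE tS]] := tGL n_gt1 hm hnm.
  have tG := subsetP hG t tS.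
  pose h := fun g => ((m%:R)%R *: f g : 'cV['Z_n]_2)%R.
  have hch : cocycle G h.
    by move=> g k gG kG; rewrite /h hc // scalerDr scalemxAr.
  have hM : forall g, g \in G -> (m%:R *: h g = h g)%R.
    by move=> g _; rewrite /h scalerA ee_lemma.
  have [vh hvh] := two_part n_gt1 hm hnm tG tE hch hM.
  set c : 'Z_n := (((m.+1)./2)%:R)%R.
  have c2 : (c * 2%:R = 1 + m%:R)%R.
    rewrite /c -natrM; have -> : ((m.+1)./2 * 2 = m.+1)%N.
      by have := odd_double_half m.+1; rewrite /= hm /= add0n -mul2n mulnC.
    by rewrite -addn1 natrD addrC.
  exists (c *: (- f z) - vh)%R => g gG /=.
  have hg := hvh g gG; rewrite R in hg.
  rewrite mulr1n R mulmxBr -scalemxAr -(two f hc g gG) -hg /h -scaler_nat scalerA c2.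
  by rewrite scalerDl scale1r addrK.
- exists ((- f z) *+ 2 ^ r)%R => g gG /=.
  by rewrite R expnS mulrnA two // -!scaler_nat scalemxAr.
Qed.
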